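(* Let $T>0$ and $K>0$. Assume that $|c(y)(0)|\le K$ for every $c\in\mathcal{C}$, that the density $\rho$ is nonincreasing, and that $$\rho(T)\ge d\qquad\text{and}\qquad K\le\bar F(T).$$ Then $\mathbb{E}[|\mathcal{H}(\mathcal{T}_{t,c})|]\le 1$ for all $c\in\mathcal{C}$ and all $t\in[0,T]$; in particular the integrability hypothesis $\sup_{c\in\mathcal{C},\,t\in[0,T]}\mathbb{E}[|\mathcal{H}(\mathcal{T}_{t,c})|]<\infty$ holds.
   Context: Let $d\ge1$ and let $f=(f_1,\ldots,f_d):\mathbb{R}^d\to\mathbb{R}^d$ with each $f_i$ smooth ($C^\infty$) and Lipschitz; $y(0)\in\mathbb{R}^d$ is a fixed initial condition. Write $\partial_j=\partial/\partial y_j$. For $g:\mathbb{R}^d\to\mathbb{R}$, $g^*$ sends a path $y:\mathbb{R}_+\to\mathbb{R}^d$ to $t\mapsto g(y(t))$; ${\rm Id}_i$ sends $y\mapsto y_i$. Codes: $\mathcal{C}=\{{\rm Id}_i:1\le i\le d\}\cup\{(\partial_1^{i_1}\cdots\partial_d^{i_d}f_i)^*: i_1,\ldots,i_d\ge0,\ 1\le i\le d\}$ (formal symbols). Mechanism: $\mathcal{M}({\rm Id}_i)=\{(f_i^* )\}$ and $\mathcal{M}(g^* )=\{(f_1^*,(\partial_1g)^* ),\ldots,(f_d^*,(\partial_dg)^* )\}$. The value $c(y)(0)$ is $y_i(0)$ if $c={\rm Id}_i$ and $g(y(0))$ if $c=g^*$. Random coding tree: fix a probability density $\rho:\mathbb{R}_+\to(0,\infty)$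 with tail $\bar F(t)=\int_t^\infty\rho(u)\,du$. For $t\ge0$ and $c\in\mathcal{C}$, $\mathcal{T}_{t,c}$ is the branching particle system started at time $0$ by one particle with code $c$: each particle $k$, with code $c_k$ born at time $T_{k-}$, has an independent lifetime $\tau_k$ of density $\rho$. If $T_{k-}+\tau_k>t$ the particle is a leaf (set $\mathcal{K}^\partial$). Otherwise it dies at $T_k=T_{k-}+\tau_k\le t$ (set $\mathcal{K}^\circ$), an independent tuple $I_k$ is drawn uniformly in $\mathcal{M}(c_k)$, with probability $q_{c_k}(I_k)=1/|\mathcal{M}(c_k)|$, and the particle is replaced by $|I_k|$ offspring born at $T_k$ carrying the codes listed in $I_k$, evolving independently by the same rule. The functional is $$\mathcal{H}(\mathcal{T}_{t,c})=\prod_{k\in\mathcal{K}^\circ}\frac{1}{q_{c_k}(I_k)\,\rho(T_k-T_{k-})}\prod_{k\in\mathcal{K}^\partial}\frac{c_k(y)(0)}{\bar F(t-T_{k-})}.$$ *)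

(* Defs.v *)
From HB Require Import structures.
From mathcomp Require Import all_boot all_order all_algebra.
From mathcomp Require Import all_classical all_reals all_analysis.
Set Implicit Arguments. Unset Strict Implicit. Unset Printing Implicit Defensive.
Import Order.TTheory GRing.Theory Num.Theory.
Import numFieldNormedType.Exports.
Local Open Scope classical_set_scope.
Local Open Scope ring_scope.

Section Defs.
Variables (R : realType) (d : nat).

Definition unitv (j : 'I_d) : 'rV[R]_d := \row_k (k == j)%:R.

Definition partial (j : 'I_d) (g : 'rV[R]_d -> R^o) : 'rV[R]_d -> R^o :=
  fun x => 'D_(unitv j) g x.

Definition iter_partials (js : seq 'I_d) (g : 'rV[R]_d -> R^o) :=
  foldr partial g js.

(* d_1^{a_1} ... d_d^{a_d} g  (d_d applied first, d_1 last) *)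
Definition dpow (a : 'I_d -> nat) (g : 'rV[R]_d -> R^o) : 'rV[R]_d -> R^o :=
  foldr (fun j h => iter (a j) (partial j) h) g (enum 'I_d).

Definition smooth (g : 'rV[R]_d -> R^o) :=
  forall (js : seq 'I_d) (x : 'rV[R]_d), differentiable (iter_partials js g) x.

(* codes: Id_i, and (d_1^{a_1}...d_d^{a_d} f_i)^* *)
Inductive bcode := CId of 'I_d | CDer of 'I_d & ('I_d -> nat).

Definition zero_mi : 'I_d -> nat := fun _ => 0%N.
Definition add_e (a : 'I_d -> nat) (j : 'I_d) : 'I_d -> nat :=
  fun k => if k == j then (a k).+1 else a k.

Definition code_val (f : 'I_d -> 'rV[R]_d -> R^o) (y0 : 'rV[R]_d) (c : bcode) : R :=
  match c with
  | CId i => y0 ord0 i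
  | CDer i a => dpow a (f i) y0
  end.

(* the j-th element of the mechanism M(c) (for Id_i the unique element) *)
Definition mech (c : bcode) (j : 'I_d) : seq bcode :=
  match c with
  | CId i => [:: CDer i zero_mi]
  | CDer i a => [:: CDer j zero_mi; CDer i (add_e a j)]
  end.

Definition mech_size (c : bcode) : nat :=
  match c with CId _ => 1%N | CDer _ _ => d end.

Definition qc (c : bcode) : R := (mech_size c)%:R^-1.

Definition Fbar (rho : R -> R) (t : R) : R :=
  fine (\int[lebesgue_measure]_(u in `[t, +oo[) (rho u)%:E)%E.

(* H restricted to trees of at most n+1 generations: the particle with
   Ulam-Harris label k, born at time b, with bcode c, and its descendants. *)
Fixpoint Hfuel (T : Type) (f : 'I_d -> 'rV[R]_d -> R^o) (y0 : 'rV[R]_d)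
  (rho : R -> R) (tau : seq nat -> T -> R) (J : seq nat -> T -> 'I_d)
  (t : R) (n : nat) (k : seq nat) (b : R) (c : bcode) (w : T) : option R :=
  if t < b + tau k w then Some (code_val f y0 c / Fbar rho (t - b))
  else match n with
  | 0%N => None
  | n'.+1 =>
    let s := tau k w in
    let I := mech c (J k w) in
    let fix prodch (m : nat) (l : seq bcode) : option R :=
      match l with
      | [::] => Some 1
      | c' :: l' =>
        match Hfuel f y0 rho tau J t n' (rcons k m) (b + s) c' w, prodch m.+1 l' with
        | Some v, Some p => Some (v * p)
        | _, _ => None
        end
      end in
    match prodch 0%N I with
    | Some p => Some ((qc c * rho s)^-1 * p)
    | None => None
    end
  end.

(* H(T_{t,c})(w): defined whenever the random tree is finite (which happens
   almost surely); 0 (arbitrary) otherwise. *)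
Definition Hfun (T : Type) (f : 'I_d -> 'rV[R]_d -> R^o) (y0 : 'rV[R]_d)
  (rho : R -> R) (tau : seq nat -> T -> R) (J : seq nat -> T -> 'I_d)
  (t : R) (c : bcode) (w : T) : R :=
  xget 0 [set v | exists n, Hfuel f y0 rho tau J t n [::] 0 c w = Some v].

End Defs.

(* Main.v *)
Require Import Defs.
From HB Require Import structures.
From mathcomp Require Import all_boot all_order all_algebra.
From mathcomp Require Import all_classical all_reals all_analysis.
Import Order.TTheory GRing.Theory Num.Theory.
Import numFieldNormedType.Exports.
Local Open Scope classical_set_scope.
Local Open Scope ring_scope.
From mathcomp Require Import simple_functions measurable_realfun.

Lemma Hfuel_bound (R : realType) (d : nat) (f : 'I_d -> 'rV[R]_d -> R^o) (y0 : 'rV[R]_d)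
  (rho : R -> R) (T : Type) (tau : seq nat -> T -> R) (J : seq nat -> T -> 'I_d)
  (t : R) (w : T)
  (HL : forall c x, 0 <= x <= t -> `|code_val f y0 c / Fbar rho x| <= 1)
  (HN : forall (c : bcode d) s, 0 <= s <= t -> `|(qc R c * rho s)^-1| <= 1)
  (tau0 : forall k, 0 <= tau k w) :
  forall n k b c v, 0 <= b -> b <= t ->
    Hfuel f y0 rho tau J t n k b c w = Some v -> `|v| <= 1.
Proof.
elim=> [|n IH] k b c v b0 bt /=.
  case: ifP => // _ [<-]; apply: HL; rewrite subr_ge0 bt lerBlDr lerDl b0 //.
case: ifP => [_ [<-]|]; first by apply: HL; rewrite subr_ge0 bt lerBlDr lerDl b0.
move/negbT; rewrite -leNgt => hle.
have b'0 : 0 <= b + tau k w by rewrite addr_ge0.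
have key : forall l m p, (fix prodch (m : nat) (l : seq (bcode d)) : option R :=
      match l with
      | [::] => Some 1
      | c' :: l' =>
        match Hfuel f y0 rho tau J t n (rcons k m) (b + tau k w) c' w, prodch m.+1 l' with
        | Some v, Some p => Some (v * p)
        | _, _ => None
        end
      end) m l = Some p -> `|p| <= 1.
  elim=> [|c' l IHl] m p /=; first by move=> [<-]; rewrite normr1.
  case E1: (Hfuel _ _ _ _ _ _ _ _ _ _ _) => [v1|] //.
  case E2: (_ m.+1 l) => [p1|] // [<-].
  rewrite normrM; apply: mulr_ile1 => //; [exact: (IH _ _ _ _ b'0 hle E1)|exact: (IHl _ _ E2)].
case E: (_ 0%N _) => [p|] // [<-].
rewrite normrM; apply: mulr_ile1 => //; last exact: (key _ _ _ E).
apply: HN; rewrite tau0 /=; by apply: le_trans hle; rewrite lerDr b0.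
Qed.
Lemma int_le1 (R : realType) (dΩ : measure_display) (Ω : measurableType dΩ) (P : probability Ω R)
  (g : Ω -> R) (N : set Ω) : P.-negligible N -> (forall w, ~ N w -> `|g w| <= 1) ->
  (\int[P]_w (`|g w|)%:E <= 1)%E.
Proof.
move=> hN hg.
rewrite ge0_integralTE; last by move=> w; rewrite lee_fin.
apply: ge_ereal_sup => _ [h hh <-].
have := integral_nnsfun P measurableT h; rewrite patch_setT => <-.
apply: (@le_trans _ _ (\int[P]_(x in setT) (cst 1%R x)%:E)%E).
  apply: ae_ge0_le_integral => //.
  - move=> x _ /=; rewrite lee_fin. exact: (isNonNegFun.fun_ge0 (HBNNSimple.NonNegSimpleFun.numfun_isNonNegFun_mixin (HBNNSimple.NonNegSimpleFun.class h)) x).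
  - apply/measurable_realfun.measurable_EFinP. exact: (isMeasurableFun.measurable_funPT (HBNNSimple.NonNegSimpleFun.measurable_function_isMeasurableFun_mixin (HBNNSimple.NonNegSimpleFun.class h))).
  - by apply/measurable_realfun.measurable_EFinP; exact: measurable_cst.
  - apply: (negligibleS _ hN) => x /= hx; apply: contrapT => nx; apply: hx => _.
    apply: le_trans (hh x) _; rewrite lee_fin; exact: hg.
have -> : (\int[P]_x (cst 1%R x)%:E = \int[P]_x (cst 1 x))%E by [].
rewrite integral_cst //; by rewrite mul1e; apply: probability_le1.
Qed.
Theorem proposition1 (R : realType) (d : nat) (d_gt0 : (0 < d)%N)
  (f : 'I_d -> 'rV[R]_d -> R^o) (y0 : 'rV[R]_d)
  (f_smooth : forall i, smooth (f i)) (f_lip : forall i, lipschitz (f i))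
  (rho : R -> R)
  (rho_meas : measurable_fun (`[0, +oo[ : set R) rho)
  (rho_pos : forall u, 0 <= u -> 0 < rho u)
  (rho_int : (\int[lebesgue_measure]_(u in (`[0%R, +oo[ : set R)) (rho u)%:E = 1)%E)
  (dΩ : measure_display) (Ω : measurableType dΩ) (P : probability Ω R)
  (tau : seq nat -> Ω -> R) (J : seq nat -> Ω -> 'I_d)
  (tau_meas : forall k, measurable_fun setT (tau k))
  (J_meas : forall k j, measurable (J k @^-1` [set j]))
  (tau_law : forall k (A : set R), measurable A ->
     P (tau k @^-1` A) = (\int[lebesgue_measure]_(u in A `&` (`[0%R, +oo[ : set R)) (rho u)%:E)%E)
  (J_law : forall k j, P (J k @^-1` [set j]) = (d%:R^-1)%:E)
  (indep : forall (ks : seq (seq nat)) (A : seq nat -> set R) (B : seq nat -> set 'I_d),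
     uniq ks -> (forall k, measurable (A k)) ->
     P (\bigcap_(k in [set` ks]) (tau k @^-1` A k `&` J k @^-1` B k)) =
     (\prod_(k <- ks) (P (tau k @^-1` A k) * P (J k @^-1` B k)))%E)
  (T K : R) (T_gt0 : 0 < T) (K_gt0 : 0 < K)
  (val_bound : forall c : bcode d, `|code_val f y0 c| <= K)
  (rho_noninc : forall u v, 0 <= u -> u <= v -> rho v <= rho u)
  (rho_T : d%:R <= rho T) (K_Fbar : K <= Fbar rho T) :
  forall (c : bcode d) (t : R), 0 <= t -> t <= T ->
    (\int[P]_w (`|Hfun f y0 rho tau J t c w|)%:E <= 1)%E.
Proof.
move=> c t t0 tT.
pose I x := (\int[lebesgue_measure]_(u in `[x, +oo[) (rho u)%:E)%E.
have mrho : forall x, 0 <= x -> measurable_fun (`[x, +oo[ : set R) (fun u => (rho u)%:E).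
  move=> x x0; apply/measurable_realfun.measurable_EFinP.
  apply: measurable_funS rho_meas => //.
  by move=> u /=; rewrite !in_itv /= !andbT => /(le_trans x0).
have I_mono : forall x y, 0 <= x -> x <= y -> (I y <= I x)%E.
  move=> x y x0 xy; apply: ge0_subset_integral => //; first exact: mrho.
    by move=> u /=; rewrite in_itv /= andbT => xu; rewrite lee_fin ltW // rho_pos // (le_trans x0).
  by move=> u /=; rewrite !in_itv /= !andbT => /(le_trans xy).
have I_ge0 : forall x, 0 <= x -> (0 <= I x)%E.
  move=> x x0; apply: integral_ge0 => u /=; rewrite in_itv /= andbT => xu.
  by rewrite lee_fin ltW // rho_pos // (le_trans x0).
have I_fin : forall x, 0 <= x -> I x \is a fin_num.
  move=> x x0; rewrite ge0_fin_numE ?I_ge0 //; apply: (le_lt_trans (I_mono 0 x _ x0)) => //.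
  by rewrite /I rho_int ltry.
have F_mono : forall x, 0 <= x -> x <= T -> Fbar rho T <= Fbar rho x.
  move=> x x0 xT; rewrite /Fbar; apply: fine_le; rewrite ?I_fin //.
    by apply: (le_trans x0).
  exact: I_mono.
have FT_pos : 0 < Fbar rho T by apply: lt_le_trans K_Fbar.
have HL : forall (c' : bcode d) x, 0 <= x <= t -> `|code_val f y0 c' / Fbar rho x| <= 1.
  move=> c' x /andP[x0 xt].
  have Fx := F_mono x x0 (le_trans xt tT).
  have Fxp : 0 < Fbar rho x by apply: lt_le_trans Fx.
  rewrite normrM normfV (gtr0_norm Fxp) ler_pdivrMr // mul1r.
  exact: le_trans (val_bound c') (le_trans K_Fbar Fx).
have HN : forall (c' : bcode d) s, 0 <= s <= t -> `|(qc R c' * rho s)^-1| <= 1.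
  move=> c' s /andP[s0 st].
  have rs : rho T <= rho s by apply: rho_noninc => //; exact: le_trans tT.
  have ms : ((mech_size c')%:R <= d%:R :> R).
    by rewrite ler_nat; case: (c') => //=.
  have m0 : (0 < (mech_size c')%:R :> R).
    by rewrite ltr0n; case: (c') => //=.
  have rp : 0 < rho s by apply: rho_pos.
  rewrite /qc invfM invrK ger0_norm; last by rewrite mulr_ge0 // invr_ge0 ltW.
  by rewrite -/(_ / _) ler_pdivrMr // mul1r (le_trans ms) // (le_trans rho_T).
pose N : set Ω := \bigcup_n (tau (odflt [::] (@unpickle (seq nat) n)) @^-1` `]-oo, 0[).
have := @int_le1 _ _ _ P (Hfun f y0 rho tau J t c) N. apply.
  apply: negligible_bigcup => n; move: (odflt _ _) => k.
  exists (tau k @^-1` `]-oo, 0[); split => //.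
    by rewrite -[X in measurable X]setTI; apply: tau_meas.
  apply: eq_trans (tau_law (k : seq nat) (`]-oo, 0%R[%classic) _) _ => //.
  have -> : `]-oo, 0[ `&` `[0, +oo[ = set0 :> set R.
    apply/seteqP; split => u //=; rewrite !in_itv /= andbT => -[u0 u0'].
    by move: (lt_le_trans u0 u0'); rewrite ltxx.
  by rewrite integral_set0.
move=> w wN.
have tau0 : forall k, 0 <= tau k w.
  move=> k; rewrite leNgt; apply/negP => tk; apply: wN.
  by exists (pickle k) => //; rewrite pickleK /= in_itv.
rewrite /Hfun.
have [[v [n hv]]|nex] := pselect (exists v, exists n, Hfuel f y0 rho tau J t n [::] 0 c w = Some v).
  have [n' hn'] : [set v | exists n, Hfuel f y0 rho tau J t n [::] 0 c w = Some v]
     (xget 0 [set v | exists n, Hfuel f y0 rho tau J t n [::] 0 c w = Some v]).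
    by apply: xgetPex; exists v, n.
  exact: (@Hfuel_bound R d f y0 rho Ω tau J t w HL HN tau0 _ _ _ _ _ (lexx 0) t0 hn').
rewrite xgetPN ?normr0 // => v [n hv]; apply: nex; by exists v, n.
Qed.
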